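(* Let $\{S(t)\}_{t\ge0}$ be a dissipative semigroup on a complete metric space $(X,d)$ and let $\mathcal{B}_0$ be a positively invariant bounded absorbing set. Assume there exist constants $T>0$, $\delta_0>0$, $\eta\in[0,1)$, a function $g:(\mathbb{R}^+)^m\to\mathbb{R}^+$ and pseudometrics $\varrho_1,\dots,\varrho_m$ on $\mathcal{B}_0$ such that: (i) $g$ is non-decreasing in each variable, $g(0,\dots,0)=0$, and $g$ is continuous at $(0,\dots,0)$; (ii) each $\varrho_i$ is precompact on $\mathcal{B}_0$, i.e. every sequence in $\mathcal{B}_0$ has a subsequence which is Cauchy with respect to $\varrho_i$; (iii) the inequality $$d(S(T)y_1,S(T)y_2)\le\eta\, d(y_1,y_2)+g\big(\varrho_1(y_1,y_2),\dots,\varrho_m(y_1,y_2)\big)$$ holds for all $y_1,y_2\in\mathcal{B}_0$ with $\varrho_i(y_1,y_2)\le\delta_0$ for $i=1,\dots,m$. Then $(X,\{S(t)\}_{t\ge0})$ is exponentially decaying with respect to the noncompactness measure, and for every bounded $B\subseteq X$, $$\alpha(S(t)B)\le\eta^{\frac{t-t_*(B)-T}{T}}\alpha(\mathcal{B}_0)\quad\forall t\ge t_*(B)+T,$$ where $t_*(B)$ satisfies $S(t)B\subseteq\mathcal{B}_0$ for all $t\ge t_*(B)$.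
   Context: A semigroup consists of continuous maps $S(t):X\to X$ with $S(0)=I$, $S(t+s)=S(t)S(s)$; it is dissipative if it has a bounded absorbing set (a closed set $\mathcal{B}$ such that every bounded $B$ satisfies $S(t)B\subseteq\mathcal{B}$ for all large $t$); positively invariant means $S(t)\mathcal{B}_0\subseteq\mathcal{B}_0$ for $t\ge0$. $\alpha$ is the Kuratowski measure of noncompactness, $\alpha(B)=\inf\{\delta>0:B\text{ has a finite cover by sets of diameter}<\delta\}$. The system is exponentially decaying with respect to the noncompactness measure if it is dissipative and there are $t_0>0$ and constants $C,\beta>0$ with $\alpha(S(t)\mathcal{B}_0)\le Ce^{-\beta t}$ for all $t\ge t_0$, for a positively invariant bounded absorbing set $\mathcal{B}_0$. *)

(* Defs.v *)
From Stdlib Require Import Reals Lra.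
From Stdlib Require Vectors.Fin.
From Coquelicot Require Import Coquelicot.
Open Scope R_scope.

Section Defs.
Variable X : Type.
Variable d : X -> X -> R.

Definition metric_axioms : Prop :=
  (forall x y, 0 <= d x y) /\ (forall x y, d x y = 0 <-> x = y) /\
  (forall x y, d x y = d y x) /\ (forall x y z, d x z <= d x y + d y z).

Definition cauchy_seq (rho : X -> X -> R) (u : nat -> X) : Prop :=
  forall eps, 0 < eps -> exists N, forall n p, (N <= n)%nat -> (N <= p)%nat ->
    rho (u n) (u p) < eps.

Definition seq_conv (u : nat -> X) (l : X) : Prop :=
  forall eps, 0 < eps -> exists N, forall n, (N <= n)%nat -> d (u n) l < eps.

Definition complete_space : Prop :=
  forall u, cauchy_seq d u -> exists l, seq_conv u l.

Definition bounded_set (B : X -> Prop) : Prop :=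
  exists x0 r, forall x, B x -> d x0 x <= r.

Definition closed_set (B : X -> Prop) : Prop :=
  forall u l, (forall n, B (u n)) -> seq_conv u l -> B l.

Definition continuous_map (f : X -> X) : Prop :=
  forall x eps, 0 < eps -> exists del, 0 < del /\
    forall y, d x y < del -> d (f x) (f y) < eps.

Definition img (f : X -> X) (B : X -> Prop) : X -> Prop :=
  fun y => exists x, B x /\ y = f x.

Definition subset_of (A B : X -> Prop) : Prop := forall x, A x -> B x.

Definition is_semigroup (S : R -> X -> X) : Prop :=
  (forall x, S 0 x = x) /\
  (forall t s x, 0 <= t -> 0 <= s -> S (t + s) x = S t (S s x)) /\
  (forall t, 0 <= t -> continuous_map (S t)).

Definition absorbing (S : R -> X -> X) (A : X -> Prop) : Prop :=
  closed_set A /\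
  forall B, bounded_set B -> exists t0, 0 <= t0 /\
    forall t, t0 <= t -> subset_of (img (S t) B) A.

Definition dissipative (S : R -> X -> X) : Prop :=
  exists A, bounded_set A /\ absorbing S A.

Definition pos_invariant (S : R -> X -> X) (A : X -> Prop) : Prop :=
  forall t, 0 <= t -> subset_of (img (S t) A) A.

Definition diam_lt (A : X -> Prop) (delta : R) : Prop :=
  exists delta', delta' < delta /\ forall x y, A x -> A y -> d x y <= delta'.

Definition finite_cover_diam_lt (B : X -> Prop) (delta : R) : Prop :=
  exists l : list (X -> Prop),
    (forall A, List.In A l -> diam_lt A delta) /\
    (forall x, B x -> exists A, List.In A l /\ A x).

(* Kuratowski measure of noncompactness (value in Rbar; +oo if no such cover) *)
Definition kuratowski (B : X -> Prop) : Rbar :=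
  Glb_Rbar (fun delta => 0 < delta /\ finite_cover_diam_lt B delta).

Definition exp_decaying (S : R -> X -> X) : Prop :=
  dissipative S /\
  exists B0, bounded_set B0 /\ absorbing S B0 /\ pos_invariant S B0 /\
  exists t0 C beta, 0 < t0 /\ 0 < C /\ 0 < beta /\
    forall t, t0 <= t -> Rbar_le (kuratowski (img (S t) B0)) (Finite (C * exp (- beta * t))).

Definition pseudometric_on (B0 : X -> Prop) (rho : X -> X -> R) : Prop :=
  (forall x y, B0 x -> B0 y -> 0 <= rho x y) /\
  (forall x, B0 x -> rho x x = 0) /\
  (forall x y, B0 x -> B0 y -> rho x y = rho y x) /\
  (forall x y z, B0 x -> B0 y -> B0 z -> rho x z <= rho x y + rho y z).

Definition precompact_on (B0 : X -> Prop) (rho : X -> X -> R) : Prop :=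
  forall u : nat -> X, (forall n, B0 (u n)) ->
    exists phi : nat -> nat, (forall n, (phi n < phi (S n))%nat) /\
      cauchy_seq rho (fun n => u (phi n)).
End Defs.

Definition rpow (a y : R) : R :=
  if Req_EM_T a 0 then (if Req_EM_T y 0 then 1 else 0) else Rpower a y.

Definition g_admissible (m : nat) (g : (Fin.t m -> R) -> R) : Prop :=
  (forall u, (forall i, 0 <= u i) -> 0 <= g u) /\
  (forall u v, (forall i, 0 <= u i /\ u i <= v i) -> g u <= g v) /\
  g (fun _ => 0) = 0 /\
  (forall eps, 0 < eps -> exists del, 0 < del /\
     forall u, (forall i, 0 <= u i /\ u i <= del) -> Rabs (g u - g (fun _ => 0)) < eps).

(* Main.v *)
Require Import Defs.
From Stdlib Require Import Reals.
From Stdlib Require Vectors.Fin.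
From Coquelicot Require Import Coquelicot.
From Stdlib Require Import Lra Lia List ClassicalEpsilon Classical.
Open Scope R_scope.

Fixpoint fin_all (n : nat) : list (Fin.t n) :=
  match n with O => nil | Datatypes.S n' => Fin.F1 :: map Fin.FS (fin_all n') end.

Lemma fin_all_in : forall n (i : Fin.t n), In i (fin_all n).
Proof. induction i; simpl; [left; reflexivity | right; apply in_map; exact IHi]. Qed.

Lemma incr_mono (f : nat -> nat) : (forall n, (f n < f (Datatypes.S n))%nat) ->
  forall n p, (n < p)%nat -> (f n < f p)%nat.
Proof. intros H n p Hnp. induction Hnp. apply H. specialize (H m). lia. Qed.

Lemma incr_ge (f : nat -> nat) : (forall n, (f n < f (Datatypes.S n))%nat) -> forall n, (n <= f n)%nat.
Proof. intros H n; induction n; [lia| specialize (H n); lia]. Qed.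

Lemma cauchy_sub X (rho : X -> X -> R) (u : nat -> X) (f : nat -> nat) :
  (forall n, (f n < f (Datatypes.S n))%nat) -> cauchy_seq X rho u -> cauchy_seq X rho (fun n => u (f n)).
Proof. intros Hf Hc eps He. destruct (Hc eps He) as [N HN]. exists N. intros n p Hn Hp.
  apply HN; pose proof (incr_ge f Hf n); pose proof (incr_ge f Hf p); lia. Qed.

Lemma joint_subseq X (B0 : X -> Prop) m (rho : Fin.t m -> X -> X -> R) :
  (forall i, precompact_on X B0 (rho i)) -> forall L u, (forall n, B0 (u n)) ->
  exists phi : nat -> nat, (forall n, (phi n < phi (Datatypes.S n))%nat) /\
    forall i, In i L -> cauchy_seq X (rho i) (fun n => u (phi n)).
Proof.
  intros Hp L; induction L as [|a L IH]; intros u Hu.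
  - exists (fun n => n). split; [intros; lia | intros i []].
  - destruct (IH u Hu) as [phi [Hphi Hc]].
    destruct (Hp a (fun n => u (phi n)) (fun n => Hu (phi n))) as [psi [Hpsi Hca]].
    exists (fun n => phi (psi n)). split.
    + intros n. apply incr_mono; auto.
    + intros i [<-|Hi]. exact Hca.
      apply (cauchy_sub X (rho i) (fun n => u (phi n)) psi Hpsi (Hc i Hi)).
Qed.

Lemma common_N {I} (P : I -> nat -> nat -> Prop) (L : list I) :
  (forall i, In i L -> exists N, forall n p, (N <= n)%nat -> (N <= p)%nat -> P i n p) ->
  exists N, forall i, In i L -> forall n p, (N <= n)%nat -> (N <= p)%nat -> P i n p.
Proof.
  induction L as [|a L IH]; intros H.
  - exists O. intros i [].
  - destruct (H a (or_introl eq_refl)) as [Na HNa].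
    destruct IH as [NL HNL]. { intros i Hi; apply H; right; exact Hi. }
    exists (Nat.max Na NL). intros i [<-|Hi] n p Hn Hp.
    + apply HNa; lia.
    + apply HNL; auto; lia.
Qed.

Lemma joint_net X (B0 : X -> Prop) m (rho : Fin.t m -> X -> X -> R) :
  (forall i, precompact_on X B0 (rho i)) -> forall eps, 0 < eps ->
  exists cs : list X, (forall c, In c cs -> B0 c) /\
    forall x, B0 x -> exists c, In c cs /\ forall i, rho i x c < eps.
Proof.
  intros Hp eps He.
  apply NNPP; intro Hno.
  assert (H : forall cs : list X, (forall c, In c cs -> B0 c) ->
     exists x, B0 x /\ forall c, In c cs -> exists i, eps <= rho i x c).
  { intros cs Hcs. apply NNPP; intro H1. apply Hno. exists cs. split; auto.
    intros x Hx. apply NNPP; intro H2. apply H1. exists x. split; auto.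
    intros c Hc. apply NNPP; intro H3. apply H2. exists c. split; auto.
    intro i. apply Rnot_le_lt. intro H4. apply H3. exists i; exact H4. }
  destruct (H nil) as [x0 [Hx0 _]]. { intros c []. }
  assert (Hex : forall cs : list X, exists x, (forall c, In c cs -> B0 c) ->
     B0 x /\ forall c, In c cs -> exists i, eps <= rho i x c).
  { intros cs. destruct (classic (forall c, In c cs -> B0 c)) as [Hc|Hc].
    - destruct (H cs Hc) as [x Hx]. exists x; auto.
    - exists x0. intro; contradiction. }
  pose (f := fun cs => proj1_sig (constructive_indefinite_description _ (Hex cs))).
  assert (Hf : forall cs, (forall c, In c cs -> B0 c) ->
     B0 (f cs) /\ forall c, In c cs -> exists i, eps <= rho i (f cs) c).
  { intros cs. exact (proj2_sig (constructive_indefinite_description _ (Hex cs))). }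
  pose (pts := fix pts (n : nat) : list X :=
     match n with O => nil | Datatypes.S k => f (pts k) :: pts k end).
  assert (Hpts : forall n, forall c, In c (pts n) -> B0 c).
  { induction n; simpl; intros c Hc. destruct Hc. destruct Hc as [<-|Hc].
    apply (Hf _ IHn). auto. }
  pose (u := fun n => f (pts n)).
  assert (Hu : forall n, B0 (u n)). { intro n. apply (Hf _ (Hpts n)). }
  assert (Hin : forall n p, (n < p)%nat -> In (u n) (pts p)).
  { intros n p Hnp; induction Hnp; simpl; [left; reflexivity | right; exact IHHnp]. }
  destruct (joint_subseq X B0 m rho Hp (fin_all m) u Hu) as [phi [Hphi Hc]].
  destruct (common_N (fun i n p => rho i (u (phi n)) (u (phi p)) < eps) (fin_all m)) as [N HN].
  { intros i Hi. apply (Hc i Hi eps He). }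
  assert (Hlt : (phi N < phi (Datatypes.S N))%nat) by apply Hphi.
  destruct (proj2 (Hf _ (Hpts (phi (Datatypes.S N)))) (u (phi N)) (Hin _ _ Hlt)) as [i Hi].
  specialize (HN i (fin_all_in m i) (Datatypes.S N) N ltac:(lia) ltac:(lia)). simpl in HN.
  unfold u in *. lra.
Qed.

Lemma cover_mono X d A a b : finite_cover_diam_lt X d A a -> a <= b -> finite_cover_diam_lt X d A b.
Proof. intros [l [H1 H2]] Hab. exists l. split; auto. intros C HC.
  destruct (H1 C HC) as [e [He1 He2]]. exists e. split; [lra|auto]. Qed.

Lemma cover_sub X d A A' a : finite_cover_diam_lt X d A a -> (forall x, A' x -> A x) ->
  finite_cover_diam_lt X d A' a.
Proof. intros [l [H1 H2]] Hs. exists l. split; auto. Qed.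

Definition alpha_le X d A a := forall eps, 0 < eps -> finite_cover_diam_lt X d A (a+eps).

Lemma K1 X d A a : 0 <= a -> alpha_le X d A a -> Rbar_le (kuratowski X d A) (Finite a).
Proof.
  intros Ha H. unfold kuratowski.
  destruct (Glb_Rbar_correct (fun delta => 0 < delta /\ finite_cover_diam_lt X d A delta)) as [Hlb _].
  assert (Hk : forall eps, 0 < eps -> Rbar_le (Glb_Rbar (fun delta => 0 < delta /\
     finite_cover_diam_lt X d A delta)) (Finite (a + eps))).
  { intros eps He. apply Hlb. split; [lra | apply H; auto]. }
  destruct (Glb_Rbar _) as [g| |] eqn:E; simpl in *.
  - apply Rle_plus_epsilon. intros eps He. apply (Hk eps He).
  - specialize (Hk 1 Rlt_0_1). simpl in Hk. contradiction.
  - exact I.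
Qed.

Lemma K2 X d A a : Rbar_le (kuratowski X d A) (Finite a) -> alpha_le X d A a.
Proof.
  intros H eps He. unfold kuratowski in H.
  destruct (Glb_Rbar_correct (fun delta => 0 < delta /\ finite_cover_diam_lt X d A delta)) as [_ Hgl].
  apply NNPP; intro Hn.
  assert (Hlb : is_lb_Rbar (fun delta => 0 < delta /\ finite_cover_diam_lt X d A delta) (Finite (a+eps))).
  { intros x [Hx Hc]. simpl. apply Rnot_lt_le. intro Hlt. apply Hn.
    apply (cover_mono X d A x); auto; lra. }
  specialize (Hgl _ Hlb).
  destruct (Glb_Rbar _); simpl in *; try contradiction; lra.
Qed.

Lemma alpha_B0 X d B0 : metric_axioms X d -> bounded_set X d B0 ->
  exists a0, 0 <= a0 /\ kuratowski X d B0 = Finite a0.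
Proof.
  intros [Hpos [_ [Hsym Htri]]] [x0 [r Hr]].
  unfold kuratowski.
  set (E := fun delta => 0 < delta /\ finite_cover_diam_lt X d B0 delta).
  destruct (Glb_Rbar_correct E) as [Hlb Hgl].
  assert (H1 : E (2 * Rabs r + 1)).
  { split. pose proof (Rabs_pos r); lra.
    exists (B0 :: nil). split.
    - intros C [<-|[]]. exists (2 * Rabs r). split. lra. intros x y Hx Hy.
      pose proof (Htri x x0 y) as H. rewrite (Hsym x x0) in H.
      pose proof (Hr x Hx); pose proof (Hr y Hy); pose proof (Rle_abs r). lra.
    - intros x Hx. exists B0. split; [left; reflexivity| exact Hx]. }
  assert (H0 : is_lb_Rbar E (Finite 0)). { intros x [Hx _]. simpl; lra. }
  specialize (Hgl _ H0). specialize (Hlb _ H1).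
  destruct (Glb_Rbar E) as [g| |]; simpl in *; try contradiction.
  exists g; split; auto.
Qed.

Lemma key_step (X : Type) (d : X -> X -> R) (Sg : R -> X -> X) (B0 : X -> Prop) (T delta0 eta : R) (m : nat)
  (g : (Fin.t m -> R) -> R) (rho : Fin.t m -> X -> X -> R) :
  0 <= eta -> eta < 1 -> 0 < delta0 -> g_admissible m g ->
  (forall i, pseudometric_on X B0 (rho i)) ->
  (forall i, precompact_on X B0 (rho i)) ->
  (forall y1 y2, B0 y1 -> B0 y2 -> (forall i, rho i y1 y2 <= delta0) ->
     d (Sg T y1) (Sg T y2) <= eta * d y1 y2 + g (fun i => rho i y1 y2)) ->
  forall A a, (forall x, A x -> B0 x) -> alpha_le X d A a ->
  alpha_le X d (img X (Sg T) A) (eta * a).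
Proof.
  intros Heta Heta1 Hd0 [_ [_ [Hg0 Hgc]]] Hpm Hpc Hcon A a HA Hal eps He.
  destruct (Hgc (eps/2) ltac:(lra)) as [del [Hdel Hgd]].
  set (e1 := Rmin delta0 del / 2).
  assert (He1 : 0 < e1) by (unfold e1; pose proof (Rmin_pos _ _ Hd0 Hdel); lra).
  destruct (joint_net X B0 m rho Hpc e1 He1) as [cs [Hcs Hnet]].
  destruct (Hal (eps/2) ltac:(lra)) as [l [Hl1 Hl2]].
  pose (D := fun (C : X -> Prop) (c : X) =>
     img X (Sg T) (fun x => C x /\ B0 x /\ forall i, rho i x c < e1)).
  exists (flat_map (fun C => map (fun c => D C c) cs) l). split.
  - intros Dc HDc. apply in_flat_map in HDc. destruct HDc as [C [HC HDc]].
    apply in_map_iff in HDc. destruct HDc as [c [<- Hc]].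
    destruct (Hl1 C HC) as [dC [HdC1 HdC2]].
    exists (eta * dC + eps/2). split.
    + assert (H1 : eta * dC <= eta * (a + eps/2)) by (apply Rmult_le_compat_l; lra).
      assert (H2 : eta * (eps/2) < 1 * (eps/2)) by (apply Rmult_lt_compat_r; lra).
      rewrite Rmult_plus_distr_l in H1. lra.
    + intros y1 y2 [x1 [[Hx1C [Hx1B Hx1c]] ->]] [x2 [[Hx2C [Hx2B Hx2c]] ->]].
      assert (Hr : forall i, rho i x1 x2 < 2 * e1).
      { intro i. destruct (Hpm i) as [_ [_ [Hsy Htr]]].
        pose proof (Htr x1 c x2 Hx1B (Hcs c Hc) Hx2B) as H.
        rewrite (Hsy c x2 (Hcs c Hc) Hx2B) in H. specialize (Hx1c i); specialize (Hx2c i). lra. }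
      assert (Hmin1 : 2 * e1 <= delta0) by (unfold e1; pose proof (Rmin_l delta0 del); lra).
      assert (Hmin2 : 2 * e1 <= del) by (unfold e1; pose proof (Rmin_r delta0 del); lra).
      pose proof (Hcon x1 x2 Hx1B Hx2B (fun i => Rlt_le _ _ (Rlt_le_trans _ _ _ (Hr i) Hmin1))) as Hc1.
      assert (Hgl : Rabs (g (fun i => rho i x1 x2) - g (fun _ => 0)) < eps/2).
      { apply Hgd. intro i. split. destruct (Hpm i) as [Hp _]. apply Hp; auto.
        pose proof (Hr i); lra. }
      rewrite Hg0, Rminus_0_r in Hgl. pose proof (Rle_abs (g (fun i => rho i x1 x2))).
      pose proof (HdC2 x1 x2 Hx1C Hx2C).
      assert (eta * d x1 x2 <= eta * dC) by (apply Rmult_le_compat_l; lra). lra.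
  - intros y [x [Hx ->]]. destruct (Hl2 x Hx) as [C [HC HCx]].
    destruct (Hnet x (HA x Hx)) as [c [Hc Hxc]].
    exists (D C c). split.
    + apply in_flat_map. exists C. split; auto. apply in_map_iff. exists c. split; auto.
    + exists x. split; auto.
Qed.

Lemma iterate (X : Type) (d : X -> X -> R) (Sg : R -> X -> X) (B0 : X -> Prop) (T delta0 eta : R) (m : nat)
  (g : (Fin.t m -> R) -> R) (rho : Fin.t m -> X -> X -> R) :
  0 <= eta -> eta < 1 -> 0 < delta0 -> g_admissible m g ->
  (forall i, pseudometric_on X B0 (rho i)) ->
  (forall i, precompact_on X B0 (rho i)) ->
  (forall y1 y2, B0 y1 -> B0 y2 -> (forall i, rho i y1 y2 <= delta0) ->
     d (Sg T y1) (Sg T y2) <= eta * d y1 y2 + g (fun i => rho i y1 y2)) ->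
  0 < T -> is_semigroup X d Sg ->
  forall B a0 tstar, 0 <= tstar -> alpha_le X d B0 a0 ->
  (forall t, tstar <= t -> subset_of X (img X (Sg t) B) B0) ->
  forall (k : nat) s, tstar <= s -> alpha_le X d (img X (Sg (INR k * T + s)) B) (eta ^ k * a0).
Proof.
  intros Heta Heta1 Hd0 Hg Hpm Hpc Hcon HT [_ [Hsg _]] B a0 tstar Hts Ha0 Hsub k.
  induction k as [|k IHk]; intros s Hs.
  - simpl. rewrite Rmult_0_l, Rplus_0_l, Rmult_1_l. intros eps He.
    apply (cover_sub X d B0). apply Ha0; auto. apply (Hsub s Hs).
  - assert (Hnn : 0 <= INR k * T) by (apply Rmult_le_pos; [apply pos_INR|lra]).
    assert (Hsub' : forall x, img X (Sg (INR k * T + s)) B x -> B0 x) by (apply Hsub; lra).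
    pose proof (key_step X d Sg B0 T delta0 eta m g rho Heta Heta1 Hd0 Hg Hpm Hpc Hcon
       _ _ Hsub' (IHk s Hs)) as Hk.
    intros eps He.
    apply (cover_sub X d (img X (Sg T) (img X (Sg (INR k * T + s)) B))).
    + replace (eta ^ Datatypes.S k * a0) with (eta * (eta^k*a0)) by (simpl; ring). apply Hk; auto.
    + intros y [x [Hx ->]]. exists (Sg (INR k * T + s) x). split. exists x; split; auto.
      rewrite S_INR. replace ((INR k + 1) * T + s) with (T + (INR k * T + s)) by ring.
      apply Hsg; lra.
Qed.

Theorem theorem4p5 (X : Type) (d : X -> X -> R) (S : R -> X -> X)
  (B0 : X -> Prop) (T delta0 eta : R) (m : nat)
  (g : (Fin.t m -> R) -> R) (rho : Fin.t m -> X -> X -> R) :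
  metric_axioms X d -> complete_space X d ->
  is_semigroup X d S -> dissipative X d S ->
  bounded_set X d B0 -> absorbing X d S B0 -> pos_invariant X S B0 ->
  0 < T -> 0 < delta0 -> 0 <= eta < 1 ->
  g_admissible m g ->
  (forall i, pseudometric_on X B0 (rho i)) ->
  (forall i, precompact_on X B0 (rho i)) ->
  (forall y1 y2, B0 y1 -> B0 y2 -> (forall i, rho i y1 y2 <= delta0) ->
     d (S T y1) (S T y2) <= eta * d y1 y2 + g (fun i => rho i y1 y2)) ->
  exp_decaying X d S /\
  (forall B, bounded_set X d B -> forall tstar, 0 <= tstar ->
     (forall t, tstar <= t -> subset_of X (img X (S t) B) B0) ->
     forall t, tstar + T <= t ->
       Rbar_le (kuratowski X d (img X (S t) B))
               (Rbar_mult (Finite (rpow eta ((t - tstar - T) / T))) (kuratowski X d B0))).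
Proof.
  intros Hmet Hcomp Hsg Hdiss Hbd Habs Hpi HT Hd0 [Heta0 Heta1] Hg Hpm Hpc Hcon.
  destruct (alpha_B0 X d B0 Hmet Hbd) as [a0 [Ha0 Hk0]].
  assert (Hal0 : alpha_le X d B0 a0) by (apply K2; rewrite Hk0; simpl; lra).
  assert (Master : forall B tstar, 0 <= tstar ->
     (forall t, tstar <= t -> subset_of X (img X (S t) B) B0) ->
     forall t, tstar + T <= t -> exists k : nat, (1 <= k)%nat /\ (t - tstar)/T - 1 < INR k /\
       alpha_le X d (img X (S t) B) (eta ^ k * a0)).
  { intros B tstar Hts Hsub t Ht.
    assert (Hx1 : 1 <= (t - tstar)/T).
    { unfold Rdiv. rewrite <- (Rinv_r T) by lra. apply Rmult_le_compat_r;
        [apply Rlt_le, Rinv_0_lt_compat; lra | lra]. }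
    assert (Hx : 0 <= (t - tstar)/T) by lra.
    destruct (nfloor_ex _ Hx) as [k [Hk1 Hk2]].
    exists k.
    assert (HkT : INR k * T <= t - tstar).
    { assert (H : INR k * T <= (t - tstar)/T * T) by (apply Rmult_le_compat_r; lra).
      replace ((t-tstar)/T*T) with (t-tstar) in H by (field; lra). exact H. }
    split; [|split].
    - assert (H : INR 0 < INR k) by (simpl; lra). apply INR_lt in H. lia.
    - lra.
    - assert (E : img X (S t) B = img X (S (INR k * T + (t - INR k * T))) B)
        by (f_equal; f_equal; ring).
      rewrite E. apply (iterate X d S B0 T delta0 eta m g rho Heta0 Heta1 Hd0 Hg Hpm Hpc Hcon
        HT Hsg B a0 tstar Hts Hal0 Hsub k). lra. }
  split.
  - split; [exact Hdiss|]. exists B0. split; [auto|]. split; [auto|]. split; [auto|].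
    set (e' := (1 + eta)/2).
    assert (He'0 : 0 < e') by (unfold e'; lra).
    assert (He'1 : e' < 1) by (unfold e'; lra).
    assert (Hln : ln e' < 0) by (rewrite <- ln_1; apply ln_increasing; lra).
    exists T, ((a0 + 1) / e'), (- ln e' / T). split; [lra|]. split.
    { apply Rdiv_lt_0_compat; lra. } split.
    { apply Rdiv_lt_0_compat; lra. }
    intros t Ht.
    destruct (Master B0 0 (Rle_refl 0) (fun t' Ht' => Hpi t' Ht') t ltac:(lra))
      as [k [Hk1 [Hk2 Hal]]].
    apply (Rbar_le_trans _ (Finite (eta ^ k * a0))).
    + apply K1; [apply Rmult_le_pos; [apply pow_le|]; lra | exact Hal].
    + simpl.
      assert (Hpk : e' ^ k = exp (INR k * ln e')) by (rewrite <- Rpower_pow by lra; reflexivity).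
      set (P := exp (- (- ln e' / T) * t)).
      assert (HP : 0 < P) by apply exp_pos.
      assert (Hexp : exp (INR k * ln e') <= P * / e').
      { replace (/ e') with (exp (- ln e')) by (rewrite exp_Ropp, exp_ln; lra).
        unfold P. rewrite <- exp_plus. apply Rlt_le, exp_increasing.
        replace (- (- ln e' / T) * t + - ln e') with (ln e' * ((t - 0)/T - 1)) by (field; lra).
        rewrite Rmult_comm. apply Rmult_lt_gt_compat_neg_l; auto. }
      assert (H1 : eta ^ k <= e' ^ k) by (apply pow_incr; unfold e'; lra).
      assert (H2 : 0 <= eta ^ k) by (apply pow_le; lra).
      assert (H3 : 0 < / e') by (apply Rinv_0_lt_compat; lra).
      replace ((a0 + 1) / e' * P) with ((a0 + 1) * (P * / e')) by (field; lra).
      assert (H4 : eta ^ k <= P * / e') by lra.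
      nra.
  - intros B HB tstar Hts Hsub t Ht.
    destruct (Master B tstar Hts Hsub t Ht) as [k [Hk1 [Hk2 Hal]]].
    rewrite Hk0.
    replace (Rbar_mult (Finite (rpow eta ((t - tstar - T) / T))) (Finite a0))
      with (Finite (rpow eta ((t - tstar - T) / T) * a0)) by reflexivity.
    apply (Rbar_le_trans _ (Finite (eta ^ k * a0))).
    + apply K1; [apply Rmult_le_pos; [apply pow_le|]; lra | exact Hal].
    + simpl. apply Rmult_le_compat_r; auto.
      unfold rpow. destruct (Req_EM_T eta 0) as [He|He].
      * rewrite He. destruct k as [|k]; [lia|]. simpl. rewrite Rmult_0_l.
        destruct (Req_EM_T _ 0); lra.
      * assert (Hep : 0 < eta) by lra.
        rewrite <- Rpower_pow by lra. unfold Rpower.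
        apply Rlt_le, exp_increasing.
        assert (Hl : ln eta < 0) by (rewrite <- ln_1; apply ln_increasing; lra).
        replace ((t - tstar - T) / T) with ((t - tstar)/T - 1) by (field; lra).
        rewrite !(Rmult_comm _ (ln eta)).
        apply Rmult_lt_gt_compat_neg_l; auto.
Qed.
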